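(* Let $n\ge2$, $\delta>0$, $R>0$, and let $\mathbf{a}\in\mathbb{R}^n$ be a fixed nonzero vector with $-2\le\mathbf{a}_i\le2$ for all $i$ and $\mathbf{a}^\top\mathbf{1}=0$. Let $\mathbf{y}$ be uniformly distributed on the sphere $\{\mathbf{y}\in\mathbb{R}^n:\|\mathbf{y}\|_2=R\}$, and let $\tilde{\mathbf{y}}$ be obtained by rounding each entry of $\mathbf{y}$ to precision $\delta$, so that $|\tilde{\mathbf{y}}_i-\mathbf{y}_i|\le\delta$ for all $i$. Then $$\Pr\big(\mathbf{a}^\top\tilde{\mathbf{y}}=0\big)\le\frac{2\delta n^2}{\|\mathbf{a}\|_2R}.$$
   Context: $\mathbf{1}$ denotes the all-ones vector in $\mathbb{R}^n$. *)

(* Defs.v *)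
From HB Require Import structures.
From mathcomp Require Import all_boot all_order all_algebra.
From mathcomp Require Import all_classical all_reals all_analysis.
Set Implicit Arguments. Unset Strict Implicit. Unset Printing Implicit Defensive.
Import Order.TTheory GRing.Theory Num.Theory.
Local Open Scope classical_set_scope.
Local Open Scope ring_scope.

Definition norm2 {R : realType} {n : nat} (v : 'rV[R]_n) : R :=
  Num.sqrt (\sum_(i < n) v ord0 i ^+ 2).

Definition dotv {R : realType} {n : nat} (u v : 'rV[R]_n) : R :=
  \sum_(i < n) u ord0 i * v ord0 i.

(* Borel sigma-algebra on R^n = sigma-algebra generated by the coordinates. *)
Definition vmeasurable {R : realType} {n : nat} (A : set 'rV[R]_n) : Prop :=
  g_sigma_preimage (fun (i : 'I_n) (v : 'rV[R]_n) => v ord0 i) A.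

Definition orthogonal {R : realType} {n : nat} (Q : 'M[R]_n) : Prop :=
  Q *m Q^T = 1%:M.

(* y : T -> R^n is a random vector uniformly distributed on the sphere of
   radius rad: it takes values on the sphere, is Borel measurable, and its law
   is the (unique) rotation-invariant probability measure on that sphere,
   i.e. the normalized surface measure. *)
Definition uniform_on_sphere {d : measure_display} {T : measurableType d}
    {R : realType} {n : nat} (P : probability T R) (rad : R)
    (y : T -> 'rV[R]_n) : Prop :=
  [/\ (forall t, norm2 (y t) = rad),
      (forall A, vmeasurable A -> measurable (y @^-1` A)) &
      (forall (Q : 'M[R]_n) (A : set 'rV[R]_n), orthogonal Q -> vmeasurable A ->
         P (y @^-1` A) = P ((fun t => y t *m Q) @^-1` A))].

(* Main.v *)
Require Import Defs.
From HB Require Import structures.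
From mathcomp Require Import all_boot all_order all_algebra.
From mathcomp Require Import all_classical all_reals all_analysis.
From mathcomp Require Import measurable_realfun.
From mathcomp Require Import zify ring lra.
Import Order.TTheory GRing.Theory Num.Theory.
Local Open Scope classical_set_scope.
Local Open Scope ring_scope.
Set Implicit Arguments. Unset Strict Implicit.
Definition indR (R : pzRingType) (b : bool) : R := if b then 1 else 0.

Definition upd (n N : nat) (f : {ffun 'I_n -> 'I_N}) (i : 'I_n) (k : 'I_N) :
  {ffun 'I_n -> 'I_N} := [ffun j => if j == i then k else f j].

Lemma fiber_sum (R : realType) (n N : nat) (i : 'I_n) (g : {ffun 'I_n -> 'I_N} -> R) :
  N%:R * \sum_f g f = \sum_f \sum_(k < N) g (upd f i k).
Proof.
rewrite pair_big /=.
pose phi := fun p : {ffun 'I_n -> 'I_N} * 'I_N => (upd p.1 i p.2, p.1 i).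
have phiK : involutive phi.
  move=> [f k]; rewrite /phi /=; congr (_, _); last by rewrite ffunE eqxx.
  by apply/ffunP => j; rewrite !ffunE; case: eqP => [->|].
rewrite (reindex_inj (inv_inj phiK)) /=.
have -> : \sum_(p : {ffun 'I_n -> 'I_N} * 'I_N) g (upd (phi p).1 i (phi p).2)
   = \sum_(p : {ffun 'I_n -> 'I_N} * 'I_N) g p.1.
  apply: eq_bigr => p _; have := phiK p; rewrite /phi /= => e. by congr g; exact: (f_equal fst e).
transitivity (\sum_f \sum_(k < N) g f); last by rewrite pair_big.
rewrite mulr_sumr; apply: eq_bigr => f _.
by rewrite sumr_const card_ord mulr_natl.
Qed.

Lemma count_itv_eq (N k0 F : nat) :
  (\sum_(k < N) ((k0 <= k) && (k <= k0 + F)) = minn N (k0 + F).+1 - minn N k0)%N.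
Proof.
elim: N => [|N IH]; first by rewrite big_ord0 !min0n.
rewrite big_ord_recr /= IH.
case: (leqP k0 N) => h1; case: (leqP N (k0 + F)) => h2 /=; lia.
Qed.

Lemma count_itv (N k0 F : nat) :
  (\sum_(k < N) ((k0 <= k) && (k <= k0 + F)) <= F.+1)%N.
Proof. rewrite count_itv_eq; lia. Qed.


Lemma count1 (R : realType) (N : nat) (h s0 al be th m : R) :
  0 < h -> 0 < m -> m <= `|al| -> 0 <= th ->
  \sum_(k < N) indR R (`|al * (s0 + k%:R * h) + be| <= th) <= 2 * th / (m * h) + 1.
Proof.
move=> h0 m0 mal th0.
have D0 : 0 <= 2 * th / (m * h) by apply: divr_ge0; [lra| apply: mulr_ge0; lra].
pose P := fun k : 'I_N => (`|al * (s0 + k%:R * h) + be| <= th).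
case: (pickP P) => [k1 Pk1|noP]; last first.
  rewrite big1; first lra.
  by move=> k _; rewrite /P in noP; rewrite /indR noP.
case: (arg_minnP (fun k : 'I_N => nat_of_ord k) Pk1) => k0 Pk0 mink0.
pose F := Num.truncn (2 * th / (m * h)).
have key : forall k : 'I_N, P k -> ((k0 <= k) && (k <= k0 + F))%N.
  move=> k Pk; rewrite mink0 //=.
  have hk := mink0 _ Pk.
  rewrite -(subnKC hk) leq_add2l truncn_ge_nat //.
  have : `|al| * ((k - k0)%N%:R * h) <= 2 * th.
    have e : (s0 + k%:R * h) - (s0 + k0%:R * h) = (k - k0)%N%:R * h.
      by rewrite natrB //; ring.
    have -> : `|al| * ((k - k0)%N%:R * h) = `|al * ((s0 + k%:R * h) - (s0 + k0%:R * h))|.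
      by rewrite e normrM [`|(_ * h)|]ger0_norm //; apply: mulr_ge0 => //; lra.
    have -> : al * ((s0 + k%:R * h) - (s0 + k0%:R * h)) =
       (al * (s0 + k%:R * h) + be) - (al * (s0 + k0%:R * h) + be) by ring.
    apply: le_trans (ler_normB _ _) _.
    rewrite /P in Pk Pk0; lra.
  move=> H.
  rewrite ler_pdivlMr; last by apply: mulr_gt0.
  have hkk : 0 <= (k - k0)%N%:R * h :> R by apply: mulr_ge0 => //; lra.
  have : m * ((k - k0)%N%:R * h) <= `|al| * ((k - k0)%N%:R * h).
    by apply: ler_wpM2r.
  set u := (k - k0)%N%:R; move=> H2.
  have -> : u * (m * h) = m * (u * h) by ring.
  lra.
apply: (@le_trans _ _ (\sum_(k < N) ((k0 <= k) && (k <= k0 + F))%N%:R)).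
  apply: ler_sum => k _.
  rewrite /indR; case: ifP => Pk; last by case: (_ && _).
  by rewrite key.
rewrite -natr_sum.
apply: (@le_trans _ _ (F.+1)%:R); first by rewrite ler_nat count_itv.
rewrite -addn1 natrD; apply: lerD => //.
by rewrite truncn_le.
Qed.

Lemma grid_bound (R : realType) (n N : nat) (x : 'rV[R]_n) (i : 'I_n) (s0 h m th : R) :
  0 < h -> 0 < m -> m <= `|x ord0 i| -> 0 <= th ->
  N%:R * \sum_(f : {ffun 'I_n -> 'I_N})
     indR R (`|\sum_j x ord0 j * (s0 + (f j)%:R * h)| <= th)
   <= (N ^ n)%:R * (2 * th / (m * h) + 1).
Proof.
move=> h0 m0 mx th0.
rewrite (fiber_sum i).
apply: (@le_trans _ _ (\sum_(f : {ffun 'I_n -> 'I_N}) (2 * th / (m * h) + 1))); last first.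
  by rewrite sumr_const card_ffun !card_ord [in X in _ <= X]mulr_natl.
apply: ler_sum => f _.
pose be := \sum_(j | j != i) x ord0 j * (s0 + (f j)%:R * h).
have -> : \sum_(k < N) indR R (`|\sum_j x ord0 j * (s0 + (upd f i k j)%:R * h)| <= th)
   = \sum_(k < N) indR R (`|x ord0 i * (s0 + k%:R * h) + be| <= th).
  apply: eq_bigr => k _; congr (indR _ (`|_| <= _)).
  rewrite (bigD1 i) //= /upd ffunE eqxx; congr (_ + _).
  by apply: eq_bigr => j /negbTE ji; rewrite ffunE ji.
exact: count1.
Qed.

Lemma dotvC (R : realType) n (u v : 'rV[R]_n) : dotv u v = dotv v u.
Proof. by apply: eq_bigr => i _; rewrite mulrC. Qed.

Lemma dotvBr (R : realType) n (u v w : 'rV[R]_n) : dotv u (v - w) = dotv u v - dotv u w.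
Proof.
rewrite /dotv -sumrB; apply: eq_bigr => i _; rewrite !mxE; ring.
Qed.

Lemma dotvZr (R : realType) n (k : R) (u v : 'rV[R]_n) : dotv u (k *: v) = k * dotv u v.
Proof.
rewrite /dotv mulr_sumr; apply: eq_bigr => i _; rewrite !mxE; ring.
Qed.

Lemma dotvBl (R : realType) n (u v w : 'rV[R]_n) : dotv (v - w) u = dotv v u - dotv w u.
Proof. by rewrite dotvC dotvBr !(dotvC u). Qed.

Lemma dotv_mx (R : realType) n (x v : 'rV[R]_n) : x *m v^T = (dotv x v)%:M.
Proof.
rewrite [LHS]mx11_scalar; congr (_%:M).
by rewrite !mxE; apply: eq_bigr => j _; rewrite !mxE.
Qed.

Lemma dotv_eq0 (R : realType) n (v : 'rV[R]_n) : dotv v v = 0 -> v = 0.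
Proof.
move=> h; apply/rowP => j; rewrite mxE.
have : \sum_(i < n) v ord0 i * v ord0 i = 0 by [].
move/eqP; rewrite psumr_eq0; last by move=> i _; rewrite -expr2 sqr_ge0.
move/allP => /(_ j (mem_index_enum _)) /=.
by rewrite mulf_eq0 orbb => /eqP; rewrite (ord1 (ord0)).
Qed.

Lemma householder (R : realType) n (b c : 'rV[R]_n) : dotv b b = dotv c c -> b != c ->
  exists Q : 'M[R]_n, Defs.orthogonal Q /\ forall x, dotv b (x *m Q) = dotv c x.
Proof.
move=> bbcc bc.
pose v := b - c.
have vv0 : dotv v v != 0.
  apply/negP => /eqP /dotv_eq0 /eqP; rewrite subr_eq0; exact/negP.
pose k := 2 / dotv v v.
pose P := v^T *m v.
exists (1%:M - k *: P); split.
  rewrite /Defs.orthogonal.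
  have tP : P^T = P by rewrite /P trmx_mul trmxK.
  have PP : P *m P = dotv v v *: P.
    by rewrite /P mulmxA -(mulmxA v^T) dotv_mx mul_mx_scalar scalemxAl.
  rewrite [X in _ *m X]linearB /= trmx1 [X in _ *m (_ - X)]linearZ /= tP.
  rewrite mulmxBr mulmx1 mulmxBl mul1mx -!scalemxAr -!scalemxAl PP scalerA.
  rewrite scalerA; have -> : k * k * dotv v v = 2 * k.
    by rewrite /k; field.
  apply/matrixP => i j; rewrite !mxE; ring.
move=> x.
rewrite mulmxBr mulmx1 -scalemxAr mulmxA dotv_mx mul_scalar_mx scalerA.
rewrite dotvBr dotvZr.
have hv : dotv b v * 2 = dotv v v.
  rewrite /v !dotvBr !dotvBl bbcc (dotvC c b); ring.
have -> : k * dotv x v * dotv b v = dotv x v.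
  rewrite /k -hv; field; apply: contraNneq vv0; by rewrite -hv => ->; rewrite mul0r.
have -> : dotv x v = dotv x b - dotv x c by exact: dotvBr.
rewrite (dotvC x b) (dotvC x c); ring.
Qed.

Definition vecT (R : realType) (n : nat) : Type := 'rV[R]_n.
HB.instance Definition _ (R : realType) n := Choice.on (vecT R n).
HB.instance Definition _ (R : realType) n := isPointed.Build (vecT R n) 0.

Definition coorV (R : realType) n : 'I_n -> vecT R n -> R := fun i v => v ord0 i.

Lemma vmeas0 (R : realType) n : @vmeasurable R n set0.
Proof. exact: (@sigma_algebra0 _ setT). Qed.
Lemma vmeasC (R : realType) n (A : set (vecT R n)) : @vmeasurable R n A -> @vmeasurable R n (~` A).
Proof. rewrite /vmeasurable /g_sigma_preimage; exact: (@sigma_algebraC (vecT R n)). Qed.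
Lemma vmeasU (R : realType) n (F : (set (vecT R n))^nat) : (forall i, @vmeasurable R n (F i)) ->
  @vmeasurable R n (\bigcup_i F i).
Proof. rewrite /vmeasurable /g_sigma_preimage; exact: sigma_algebra_bigcup. Qed.

HB.instance Definition _ (R : realType) n := @isMeasurable.Build default_measure_display
  (vecT R n) (@vmeasurable R n) (@vmeas0 R n) (@vmeasC R n) (@vmeasU R n).

Lemma measurable_coor (R : realType) n (i : 'I_n) :
  measurable_fun [set: vecT R n] (fun v : vecT R n => (v : 'rV[R]_n) ord0 i).
Proof.
move=> _ Y mY; rewrite setTI; apply: sub_sigma_algebra.
rewrite -bigcup_seq /=; exists i => /=; first by rewrite mem_index_enum.
by exists Y => //; rewrite setTI.
Qed.

Lemma sum_prob_le (d : measure_display) (T : measurableType d) (R : realType)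
  (P : probability T R) (I : finType) (A : I -> set T) (K : R) :
  (forall i, measurable (A i)) -> (forall t, \sum_i \1_(A i) t <= K) ->
  (\sum_i P (A i) <= K%:E)%E.
Proof.
move=> mA hK.
have -> : (\sum_i P (A i) = \sum_i \int[P]_(x in setT) (\1_(A i) x)%:E)%E.
  by apply: eq_bigr => i _; rewrite integral_indic // setIT.
have mI : forall i, measurable_fun setT (EFin \o \1_(A i) : T -> \bar R).
  by move=> i; apply/measurable_realfun.measurable_EFinP; exact: measurable_realfun.measurable_indic.
have pI : forall i x, setT x -> (0 <= (\1_(A i) x)%:E :> \bar R)%E.
  by move=> i x _; rewrite lee_fin.
rewrite -(ge0_integral_sum _ _ mI pI) //.
apply: (@le_trans _ _ (\int[P]_(x in setT) (cst K%:E) x)%E).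
  apply: ge0_le_integral => //.
  - by move=> x _; apply: sume_ge0 => i _; rewrite lee_fin.
  - by apply: emeasurable_sum => i; apply/measurable_realfun.measurable_EFinP; exact: measurable_realfun.measurable_indic.
  - by move=> x _; rewrite /= sumEFin lee_fin hK.
rewrite integral_cst //; have h1 : P setT = 1%E by exact: probability_setT.
by rewrite (_ : (K%:E * _)%E = K%:E * P setT)%E // h1 mule1.
Qed.

Lemma dotv_ge0 (R : realType) n (v : 'rV[R]_n) : 0 <= dotv v v.
Proof. by apply: sumr_ge0 => i _; rewrite -expr2 sqr_ge0. Qed.

Lemma norm2_sq (R : realType) n (v : 'rV[R]_n) : norm2 v ^+ 2 = dotv v v.
Proof.
rewrite /norm2 sqr_sqrtr; last by apply: sumr_ge0 => i _; rewrite sqr_ge0.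
by apply: eq_bigr => i _; rewrite expr2.
Qed.

Lemma norm2_ge0 (R : realType) n (v : 'rV[R]_n) : 0 <= norm2 v.
Proof. exact: sqrtr_ge0. Qed.

Lemma dotvZl (R : realType) n (k : R) (u v : 'rV[R]_n) : dotv (k *: u) v = k * dotv u v.
Proof. by rewrite dotvC dotvZr dotvC. Qed.

Lemma norm2_gt0 (R : realType) n (v : 'rV[R]_n) : v != 0 -> 0 < norm2 v.
Proof.
move=> v0; rewrite lt_neqAle norm2_ge0 andbT; apply/negP => /eqP h.
have : dotv v v = 0 by rewrite -norm2_sq -h expr0n.
by move/dotv_eq0 => /eqP; apply/negP.
Qed.

Lemma big_coord (R : realType) n (v : 'rV[R]_n) (r : R) : (0 < n)%N ->
  dotv v v = r ^+ 2 -> exists i, r ^+ 2 / n%:R <= v ord0 i ^+ 2.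
Proof.
move=> n0 hv; apply/not_existsP => hall.
have : dotv v v < r ^+ 2 / n%:R *+ n.
  have -> : r ^+ 2 / n%:R *+ n = \sum_(i < n) r ^+ 2 / n%:R by rewrite sumr_const card_ord.
  rewrite /dotv.
  apply: ltr_sum.
    by apply/hasP; exists (Ordinal n0); rewrite ?mem_index_enum.
  move=> i _; rewrite -expr2 ltNge; exact/negP/hall.
rewrite -mulr_natr mulfVK ?hv ?ltxx // pnatr_eq0 -lt0n //.
Qed.

Theorem lemma8p1 (R : realType) (n : nat) (delta rad : R)
    (a : 'rV[R]_n)
    (d : measure_display) (T : measurableType d) (P : probability T R)
    (y : T -> 'rV[R]_n) (rnd : R -> R) :
  (2 <= n)%N -> 0 < delta -> 0 < rad ->
  a != 0 ->
  (forall i, -2 <= a ord0 i <= 2) ->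
  dotv a (const_mx 1) = 0 ->
  uniform_on_sphere P rad y ->
  measurable_fun setT rnd ->
  (forall x, `|rnd x - x| <= delta) ->
  (P [set t | dotv a (map_mx rnd (y t)) = 0%R] <=
    ((2 * delta * (n%:R) ^+ 2) / (norm2 a * rad))%:E)%E.
Proof.
move=> n2 d0 r0 a0 abnd _ [hnorm hmeas hinv] mrnd hrnd.
have n0 : (0 < n)%N by lia.
set na := norm2 a.
have na0 : 0 < na := norm2_gt0 a0.
pose L1 := \sum_i `|a ord0 i|.
have L1b : L1 <= 2 * n%:R.
  have -> : 2 * n%:R = \sum_(i < n) (2 : R) by rewrite sumr_const card_ord mulr_natr.
  apply: ler_sum => i _; have := abnd i; rewrite ler_norml; lra.
pose tau := delta * L1.
pose Bd := (2 * delta * (n%:R) ^+ 2) / (na * rad).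
have my : measurable_fun setT (y : T -> vecT R n).
  by move=> _ A mA; rewrite setTI; exact: hmeas.
have mdot : forall b : 'rV[R]_n, measurable_fun setT (fun v : vecT R n => dotv b v).
  move=> b; rewrite /dotv; apply: measurable_sum => i.
  exact: measurableT_comp (mulrl_measurable _) (measurable_coor i).
pose bandv (b : 'rV[R]_n) (tt : R) :=
  (fun v : vecT R n => `|dotv b v|) @^-1` [set` `]-oo, tt]].
have vmb : forall b tt, vmeasurable (bandv b tt).
  move=> b tt.
  have := measurableT_comp (@normr_measurable R setT) (mdot b) measurableT (measurable_itv `]-oo, tt]).
  by rewrite setTI.
have mB : forall b tt, measurable (y @^-1` bandv b tt).
  by move=> b tt; exact: hmeas (vmb b tt).
have inv : forall b tt, dotv b b = dotv a a ->
    P (y @^-1` bandv b tt) = P (y @^-1` bandv a tt).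
  move=> b tt hb; have [->//|ab] := eqVneq a b.
  have [Q [oQ hQ]] := householder (esym hb) ab.
  rewrite [RHS](hinv Q _ oQ (vmb a tt)); congr (P _).
  by apply/funext => t; rewrite /preimage /bandv /= hQ.
pose E := [set t | dotv a (map_mx rnd (y t)) = 0].
have EB : E `<=` y @^-1` bandv a tau.
  move=> t Et; rewrite /bandv /preimage /= in_itv /=.
  have -> : dotv a (y t) = dotv a (y t - map_mx rnd (y t)).
    by rewrite dotvBr; rewrite /E /= in Et; rewrite Et subr0.
  apply: (le_trans (ler_norm_sum _ _ _)).
  rewrite /tau /L1 mulr_sumr; apply: ler_sum => i _.
  rewrite !mxE normrM mulrC; apply: ler_wpM2r => //.
  by rewrite distrC.
have mE : measurable E.
  have mf : measurable_fun setT (fun t => \sum_(i < n) a ord0 i * rnd (y t ord0 i)).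
    apply: measurable_sum => i.
    apply: measurableT_comp (mulrl_measurable _) _.
    apply: measurableT_comp mrnd _.
    exact: measurableT_comp (measurable_coor i) my.
  have := mf measurableT [set 0] (measurable_set1 0); rewrite setTI.
  congr measurable; apply/funext => t; rewrite /E /preimage /=.
  by congr (_ = _); apply: eq_bigr => i _; rewrite mxE.
have PBf : P (y @^-1` bandv a tau) \is a fin_num.
  rewrite ge0_fin_numE ?measure_ge0 //.
  by apply: (le_lt_trans (probability_le1 _ (mB a tau))); rewrite ltry.
have PB : forall M : nat, (0 < M)%N ->
    fine (P (y @^-1` bandv a tau)) <= Bd + (M.*2)%:R^-1.
  move=> M M0.
  set p := fine _.
  pose N := M.*2.
  have N0 : (0 < N)%N by rewrite /N double_gt0.
  pose Ni : R := N%:R^-1.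
  have Ni0 : 0 < Ni by rewrite /Ni invr_gt0 ltr0n.
  have NNi : N%:R * Ni = 1 by rewrite /Ni mulfV // pnatr_eq0 -lt0n.
  pose s0 : R := -1 + Ni.
  pose h : R := 2 * Ni.
  pose z (f : {ffun 'I_n -> 'I_N}) : 'rV[R]_n := \row_j (s0 + (f j)%:R * h).
  have zb : forall f j, -1 <= z f ord0 j <= 1.
    move=> f j; rewrite /z mxE /s0 /h.
    have : ((f j).+1 <= N)%N := ltn_ord (f j).
    rewrite -(ler_nat R) -addn1 natrD => hk.
    have k0 : 0 <= (f j)%:R :> R by [].
    apply/andP; split; nra.
  have zn0 : forall f, z f != 0.
    move=> f; apply/negP => /eqP hz.
    have := congr1 (fun v : 'rV_n => v ord0 (Ordinal n0)) hz; rewrite /z !mxE.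
    set k := f _; move=> H.
    have H3 : N%:R * (s0 + k%:R * h) = - N%:R + (N%:R * Ni) + 2 * k%:R * (N%:R * Ni).
      by rewrite /s0 /h; ring.
    rewrite H mulr0 NNi in H3.
    have : ((2 * k + 1)%N%:R : R) = N%:R by rewrite natrD natrM; lra.
    move/eqP; rewrite eqr_nat /N => /eqP; lia.
  have zn : forall f, norm2 (z f) <= Num.sqrt n%:R.
    move=> f; rewrite /norm2 ler_sqrt ?ler0n //.
    have -> : (n%:R : R) = \sum_(j < n) 1 by rewrite sumr_const card_ord.
    apply: ler_sum => j _; have := zb f j; nra.
  pose c f := (na / norm2 (z f)) *: z f.
  have cc : forall f, dotv (c f) (c f) = dotv a a.
    move=> f; rewrite dotvZl dotvZr -norm2_sq -(norm2_sq a) -/na.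
    have zz := norm2_gt0 (zn0 f).
    field; by rewrite gt_eqF.
  pose sn := Num.sqrt (n%:R : R).
  have sn0 : 0 < sn by rewrite sqrtr_gt0 ltr0n.
  have snn : sn ^+ 2 = n%:R by rewrite sqr_sqrtr ?ler0n.
  pose theta := tau * sn / na.
  pose m := rad / sn.
  have m0 : 0 < m by rewrite divr_gt0.
  have tau0 : 0 <= tau.
    have : 0 <= L1 by apply: sumr_ge0 => i _; rewrite normr_ge0.
    by move=> ?; rewrite /tau mulr_ge0 //; lra.
  have th0 : 0 <= theta by rewrite /theta; apply: mulr_ge0; [apply: mulr_ge0 => //; exact: ltW | rewrite invr_ge0; exact: ltW].
  pose X := tau * n%:R / (na * rad) + Ni.
  pose K := (N ^ n)%:R * X.
  have sumE : (\sum_f P (y @^-1` bandv (c f) tau) = ((N ^ n)%:R * p)%:E)%E.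
    rewrite (eq_bigr (fun _ => P (y @^-1` bandv a tau))); last by move=> f _; apply: inv (cc f).
    by rewrite -(fineK PBf) sumEFin sumr_const card_ffun !card_ord mulr_natl.
  have bound : (\sum_f P (y @^-1` bandv (c f) tau) <= K%:E)%E.
    apply: sum_prob_le => [f|t]; first exact: mB.
    have hx : dotv (y t) (y t) = rad ^+ 2 by rewrite -norm2_sq hnorm.
    have [i hi] := big_coord n0 hx.
    have mi : m <= `|y t ord0 i|.
      have e1 : m ^+ 2 = rad ^+ 2 / n%:R by rewrite /m expr_div_n snn.
      have e2 : `|y t ord0 i| ^+ 2 = y t ord0 i ^+ 2 by rewrite real_normK ?num_real.
      have e3 := normr_ge0 (y t ord0 i).
      rewrite -e1 -e2 in hi; nra.
    have h0 : 0 < h by rewrite /h mulr_gt0.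
    have G := @grid_bound R n N (y t) i s0 h m theta h0 m0 mi th0.
    have term : forall f, \1_(y @^-1` bandv (c f) tau) t <=
        indR R (`|\sum_j y t ord0 j * (s0 + (f j)%:R * h)| <= theta).
      move=> f; rewrite indicE /indR; case: ifP => hc; first by case: (_ \in _).
      rewrite memNset ?lexx //.
      move=> Bt; move: hc => /negP; apply.
      rewrite /preimage /bandv /= in_itv /= in Bt.
      have zz := norm2_gt0 (zn0 f); have zs := zn f.
      rewrite /c dotvZl normrM (ger0_norm (x := na / _)) in Bt; last first.
        by rewrite divr_ge0 // ltW.
      have -> : \sum_j y t ord0 j * (s0 + (f j)%:R * h) = dotv (z f) (y t).
        by rewrite /dotv; apply: eq_bigr => j _; rewrite mxE mulrC.
      set u := `|dotv (z f) (y t)| in Bt *.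
      rewrite mulrAC ler_pdivrMr // in Bt.
      rewrite /theta ler_pdivlMr //.
      have u0 : 0 <= u by rewrite normr_ge0.
      have zs2 : tau * norm2 (z f) <= tau * sn by apply: ler_wpM2l.
      rewrite mulrC; exact: (le_trans Bt zs2).
    have eqK : (N ^ n)%:R * (2 * theta / (m * h) + 1) = N%:R * K.
      rewrite /K /X -snn /theta /m /h /Ni; field.
      rewrite !gt_eqF // ?ltr0n //.
    rewrite eqK in G.
    apply: (le_trans (ler_sum _ (fun f _ => term f))).
    by rewrite -(ler_pM2l (x := N%:R)) ?ltr0n.
  have : (N ^ n)%:R * p <= K by rewrite -lee_fin -sumE.
  rewrite /K ler_pM2l ?ltr0n ?expn_gt0 ?N0 // => hp.
  apply: (le_trans hp); rewrite /X lerD2r /Bd.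
  apply: ler_wpM2r; first by rewrite invr_ge0 mulr_ge0 // ltW.
  have h1 : delta * L1 <= delta * (2 * n%:R) by apply: ler_wpM2l => //; exact: ltW.
  have h2 : delta * L1 * n%:R <= delta * (2 * n%:R) * n%:R by apply: ler_wpM2r.
  rewrite /tau; apply: (le_trans h2); rewrite expr2; lra.
apply: (@le_trans _ _ (P (y @^-1` bandv a tau))).
  by apply: le_measure => //; rewrite inE.
rewrite -(fineK PBf) lee_fin.
set p := fine _ in PB *.
rewrite leNgt; apply/negP => hp.
pose e := p - Bd.
have e0 : 0 < e by rewrite /e subr_gt0.
pose M := (Num.truncn (e^-1)).+1.
have := PB M erefl.
have hM : e^-1 < M%:R by rewrite /M truncnS_gt.
have hM2 : (M.*2)%:R^-1 < e.
  rewrite -[X in _ < X]invrK ltf_pV2 ?posrE ?invr_gt0 ?ltr0n //.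
  apply: (lt_le_trans hM); rewrite ler_nat -addnn; lia.
rewrite /e in hM2; lra.
Qed.
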